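(* Let $X$ be a $\mathbf D([0,1),E)$-valued random element whose jump positions $0<Y_1<\dots<Y_{N_X}<1$ form a homogeneous Poisson point process on $[0,1)$ of intensity $\lambda>0$. Let $k\ge1$ and $(I_1,\dots,I_k)\in\mathrm{im}(\pi_k)$. Conditionally on the event $\{N_X=k,\ \pi_k(Y_1,\dots,Y_k)=(I_1,\dots,I_k)\}$, the vector $(Y_1,\dots,Y_k)$ has the same distribution as $(U_1,\dots,U_k)$, where $U_1,\dots,U_k$ are independent and $U_i$ is uniformly distributed on $I_i$.
   Context: $\mathbf D([0,1),E)$ is the space of piecewise constant functions $[0,1)\to E$ with finitely many jumps. Dyadic intervals of level $m$: $[(j-1)2^{-m},j2^{-m})$, $j=1,\dots,2^m$. For distinct $t_1,\dots,t_k\in[0,1)$ build a finite binary tree: the root is $[0,1)$; a node $I$ (a dyadic interval of level $m$) containing at least two of the points $t_i$ gets as children the two dyadic intervals of level $m+1$ contained in $I$; a node containing $0$ or $1$ of the points is a leaf. $\pi_k(t_1,\dots,t_k)=(I_1,\dots,I_k)$ is the list of the $k$ leaves containing exactly one point, arranged in their natural left-to-right order; $\mathrm{im}(\pi_k)$ is the set of all such lists. *)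

(* Defs.v *)
From HB Require Import structures.
From mathcomp Require Import all_boot all_order all_algebra.
From mathcomp Require Import all_classical all_reals all_analysis.
Set Implicit Arguments. Unset Strict Implicit. Unset Printing Implicit Defensive.
Import Order.TTheory GRing.Theory Num.Theory.
Local Open Scope classical_set_scope.
Local Open Scope ring_scope.

Section Defs.
Context {R : realType}.

(* ---------- Dyadic intervals ----------
   A dyadic interval of level m is coded by a pair (m, j) with j < 2^m and
   denotes [j 2^-m, (j+1) 2^-m)  (the paper's index j is our j+1). *)
Definition dyad := (nat * nat)%type.

Definition dyad_left (I : dyad) : R := I.2%:R / (2%:R ^+ I.1).

Definition in_dyad (I : dyad) (x : R) : bool :=
  (I.2%:R / (2%:R ^+ I.1) <= x) && (x < I.2.+1%:R / (2%:R ^+ I.1)).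

Definition dyad_set (I : dyad) : set R := [set x | in_dyad I x].

Definition npts (t : seq R) (I : dyad) : nat := count (in_dyad I) t.

(* Nodes of the binary tree built from the points t: the root [0,1) is a
   node, and the children of a node are nodes iff that node contains at
   least two points.  Equivalently: (m,j) is a node iff j < 2^m and every
   strict dyadic ancestor (level m' < m, index j / 2^(m-m')) contains at
   least two points of t. *)
Definition tree_node (t : seq R) (I : dyad) : Prop :=
  (I.2 < 2 ^ I.1)%N /\
  forall m', (m' < I.1)%N -> (2 <= npts t (m', I.2 %/ 2 ^ (I.1 - m')))%N.

(* leaves containing exactly one point (a node with one point is a leaf) *)
Definition leaf1 (t : seq R) (I : dyad) : Prop :=
  tree_node t I /\ npts t I = 1%N.

(* pi_graph t Is  <->  pi_k(t) = Is : Is lists exactly the leaves containing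
   exactly one point, in their natural left-to-right order. *)
Definition pi_graph (t : seq R) (Is : seq dyad) : Prop :=
  sorted (fun I J => dyad_left I < dyad_left J) Is /\
  (forall I, I \in Is <-> leaf1 t I).

Definition in01 (x : R) : bool := (0 <= x) && (x < 1).

Definition in_im_pi (k : nat) (Is : seq dyad) : Prop :=
  exists t : seq R, [/\ size t = k, uniq t, all in01 t & pi_graph t Is].

(* ---------- D([0,1),E) ----------
   f : R -> E (only its restriction to [0,1) matters) is piecewise constant
   on [0,1) with finitely many jumps located exactly at the points of s,
   where 0 < s_1 < ... < s_n < 1. *)
Definition D_with_jumps {E : Type} (f : R -> E) (s : seq R) : Prop :=
  let b := 0 :: rcons s 1 in
  [/\ sorted <%R (0 :: rcons s 1),
      (forall i, (i < size s + 1)%N -> forall x y,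
          nth 0 b i <= x < nth 0 b i.+1 -> nth 0 b i <= y < nth 0 b i.+1 ->
          f x = f y)
    & (forall i, (i < size s)%N -> f (nth 0 s i) <> f (nth 0 b i))].

Definition poisson_p (r : R) (n : nat) : R := r ^+ n / n`!%:R * expR (- r).

Definition cnt (A : set R) (s : seq R) : nat := count (fun x => x \in A) s.

Definition homogeneous_PPP {d} {T : measurableType d} (P : probability T R)
    (lam : R) (Y : T -> seq R) : Prop :=
  (forall A, measurable A -> forall n, measurable [set w | cnt A (Y w) = n]) /\
  (forall m (A : 'I_m -> set R),
     (forall i, measurable (A i) /\ A i `<=` [set x | in01 x]) ->
     (forall i j, i != j -> A i `&` A j = set0) ->
     forall n : 'I_m -> nat,
       P (\bigcap_(i in [set: 'I_m]) [set w | cnt (A i) (Y w) = n i]) =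
       (\prod_(i < m)
          poisson_p (lam * fine (lebesgue_measure (A i))) (n i))%:E).

Definition indep_uniform_on {d'} {T' : measurableType d'} (Q : probability T' R)
    (k : nat) (U : 'I_k -> T' -> R) (Is : seq dyad) : Prop :=
  [/\ (forall i, measurable_fun setT (U i)),
      (forall B : 'I_k -> set R, (forall i, measurable (B i)) ->
         Q (\bigcap_(i in [set: 'I_k]) (U i @^-1` B i)) =
         (\prod_(i < k) Q (U i @^-1` B i))%E)
    & (forall i B, measurable B ->
         Q (U i @^-1` B) =
         (lebesgue_measure (B `&` dyad_set (nth (0%N, 0%N) Is i)) *
          ((fine (lebesgue_measure (dyad_set (nth (0%N, 0%N) Is i))))^-1)%:E)%E)].

End Defs.

(* Main.v *)
Require Import Defs.
From HB Require Import structures.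
From mathcomp Require Import all_boot all_order all_algebra.
From mathcomp Require Import all_classical all_reals all_analysis.
From mathcomp Require Import lra zify ring.
Import Order.TTheory GRing.Theory Num.Theory.
Local Open Scope classical_set_scope.
Local Open Scope ring_scope.


Section Comb.
Variable R : realType.
Implicit Types (I J D : dyad) (x : R) (u v : seq R).

Definition anc (m : nat) (D : dyad) : dyad := (m, (D.2 %/ 2 ^ (D.1 - m))%N).

Lemma two_gt0 n : (0 : R) < 2%:R ^+ n.
Proof. by rewrite exprn_gt0. Qed.

Lemma in_dyadE I x : @in_dyad R I x =
  (I.2%:R <= x * 2%:R ^+ I.1) && (x * 2%:R ^+ I.1 < I.2.+1%:R).
Proof.
by rewrite /in_dyad ler_pdivrMr ?two_gt0 // ltr_pdivlMr ?two_gt0.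
Qed.

Lemma in_dyad_anc {I x m} : (m <= I.1)%N -> in_dyad I x -> @in_dyad R (anc m I) x.
Proof.
move=> hm; rewrite !in_dyadE /anc /=.
set a := (I.1 - m)%N.
have e : (2%:R ^+ I.1 : R) = 2%:R ^+ m * 2%:R ^+ a by rewrite -exprD subnKC.
rewrite e mulrA; set y := x * _.
have ha : (0 : R) < 2%:R ^+ a := two_gt0 a.
have h2 : (0 < 2 ^ a)%N by rewrite expn_gt0.
have ea : (2%:R ^+ a : R) = (2 ^ a)%:R by rewrite natrX.
move=> /andP[h1 h3]; apply/andP; split.
  rewrite -(ler_pM2r ha); apply: (le_trans _ h1).
  by rewrite ea -natrM ler_nat leq_divM.
have h4 : (I.2.+1 <= (I.2 %/ 2^a).+1 * 2^a)%N := ltn_ceil I.2 h2.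
have h5 : (I.2.+1%:R : R) <= (I.2 %/ 2^a).+1%:R * 2%:R^+a.
  by rewrite ea -natrM ler_nat.
rewrite -(ltr_pM2r ha); exact: (lt_le_trans h3 h5).
Qed.

Lemma in_dyad_uniq {m j j' x} : @in_dyad R (m, j) x -> in_dyad (m, j') x -> j = j'.
Proof.
rewrite !in_dyadE /= => /andP[a b] /andP[c d].
have h1 : (j < j'.+1)%N by rewrite -(ltr_nat R); exact: le_lt_trans a d.
have h2 : (j' < j.+1)%N by rewrite -(ltr_nat R); exact: le_lt_trans c b.
by apply/eqP; rewrite eqn_leq -ltnS h1 -ltnS h2.
Qed.

Lemma anc_anc p m D : (p <= m)%N -> (m <= D.1)%N -> anc p (anc m D) = anc p D.
Proof.
move=> hp hm; rewrite /anc /=; congr pair.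
by rewrite -divnMA -expnD addnBA // subnK.
Qed.

Lemma anc_id D : anc D.1 D = D.
Proof. by case: D => a b; rewrite /anc /= subnn expn0 divn1. Qed.


Lemma count_le1 (T : eqType) (a : pred T) (s : seq T) : uniq s ->
  (forall y z, y \in s -> z \in s -> a y -> a z -> y = z) -> (count a s <= 1)%N.
Proof.
elim: s => [//|y s IH] /= /andP[ys us] H.
case ay: (a y) => /=.
  have -> : count a s = 0%N.
    apply/eqP; rewrite -leqn0 leqNgt -has_count; apply/negP => /hasP[z zs az].
    have yz := H y z (mem_head _ _) (mem_behead (s:=y::s) zs) ay az.
    by move: ys; rewrite yz zs.
  by [].
by apply: IH => // y' z' y's z's; apply: H; rewrite inE ?y's ?z's orbT.
Qed.

Lemma count_eq1 (T : eqType) (a : pred T) (s : seq T) (x : T) : uniq s -> x \in s -> a x ->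
  (forall y, y \in s -> a y -> y = x) -> count a s = 1%N.
Proof.
move=> us xs ax H; apply/eqP; rewrite eqn_leq count_le1 //=.
  by rewrite -has_count; apply/hasP; exists x.
by move=> y z ys zs ay az; rewrite (H y ys ay) (H z zs az).
Qed.

Lemma leaf1_sub u I J x : leaf1 u I -> leaf1 u J -> (I.1 <= J.1)%N ->
  in_dyad I x -> @in_dyad R J x -> I = J.
Proof.
case: I => p q; case: J => p' q' /= [_ hI] [[_ hJ] _] hpp hxI hxJ.
have hA := @in_dyad_anc (p',q') x p hpp hxJ.
have eq2 : q = (q' %/ 2 ^ (p' - p))%N := in_dyad_uniq hxI hA.
move: hpp; rewrite leq_eqVlt => /orP[/eqP ep|lt].
  by subst p'; rewrite subnn expn0 divn1 in eq2; rewrite eq2.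
by move: (hJ p lt); rewrite /= -eq2 hI.
Qed.

Lemma leaf1_disj u I J x : leaf1 u I -> leaf1 u J ->
  in_dyad I x -> @in_dyad R J x -> I = J.
Proof.
move=> hI hJ xI xJ; case: (leqP I.1 J.1) => h.
  exact: leaf1_sub hI hJ h xI xJ.
by apply/esym; apply: leaf1_sub hJ hI (ltnW h) xJ xI.
Qed.


Definition lvl (x : R) (m : nat) : dyad := (m, Num.truncn (x * 2%:R ^+ m)).

Lemma in_lvl x m : 0 <= x -> in_dyad (lvl x m) x.
Proof.
move=> x0; rewrite in_dyadE /=; apply: truncn_itv.
by rewrite mulr_ge0 // ltW // two_gt0.
Qed.

Lemma anc_lvl {x m m'} : 0 <= x -> (m' <= m)%N -> anc m' (lvl x m) = lvl x m'.
Proof.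
move=> x0 hm.
have h1 := @in_dyad_anc (lvl x m) x m' hm (@in_lvl x m x0).
have := in_dyad_uniq h1 (@in_lvl x m' x0).
by rewrite /anc /lvl /= => ->.
Qed.

Lemma lvl_mono {x} {y : R} {M M'} : 0 <= x -> (M <= M')%N ->
  in_dyad (lvl x M') y -> in_dyad (lvl x M) y.
Proof.
move=> x0 hM hy; rewrite -(anc_lvl x0 hM); exact: (@in_dyad_anc (lvl x M') y M hM).
Qed.

Lemma sep {x} {y : R} : 0 <= x -> x != y -> exists M, ~~ in_dyad (lvl x M) y.
Proof.
move=> x0 xy.
have d0 : (0:R) < `|y - x| by rewrite normr_gt0 subr_eq0 eq_sym.
exists (Num.truncn `|y - x|^-1).+1; set M := (Num.truncn `|y - x|^-1).+1.
apply/negP => hy; have hx := @in_lvl x M x0.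
move: hx hy; rewrite !in_dyadE /=; set j := Num.truncn _.
have hj : (j.+1%:R : R) = j%:R + 1 by rewrite natr1.
rewrite hj => /andP[a b] /andP[c e].
have h1 : `|(y - x) * 2%:R ^+ M| < 1.
  by rewrite ltr_norml; apply/andP; split; rewrite mulrBl; lra.
rewrite normrM (ger0_norm (ltW (two_gt0 M))) in h1.
have h2 : `|y - x|^-1 < 2%:R ^+ M.
  have di : (0:R) < `|y - x|^-1 by rewrite invr_gt0.
  have := truncn_itv (ltW di) => /andP[_ h].
  apply: (lt_le_trans h); rewrite -natrX ler_nat.
  exact: ltnW (ltn_expl _ (isT : (1 < 2)%N)).
move: h2; rewrite -(ltr_pM2l d0) mulfV ?gt_eqF // => h2.
by move: (lt_trans h2 h1); rewrite ltxx.
Qed.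

Lemma small_lvl x (l : seq R) : 0 <= x -> (forall y, y \in l -> y != x) ->
  exists M, forall y, y \in l -> ~~ in_dyad (lvl x M) y.
Proof.
move=> x0; elim: l => [|y l IH] H; first by exists 0%N.
have [M1 H1] := IH (fun z zl => H z (mem_behead (s:=y::l) zl)).
have xy : x != y by rewrite eq_sym; exact: (H y (mem_head _ _)).
have [M2 H2] := sep x0 xy.
exists (maxn M1 M2) => z; rewrite inE => /orP[/eqP ->|zl].
  apply/negP => h; move/negP: H2; apply; exact: (lvl_mono x0 (leq_maxr _ _) h).
apply/negP => h; move/negP: (H1 z zl); apply; exact: (lvl_mono x0 (leq_maxl _ _) h).
Qed.

Lemma exists_leaf {u x} : uniq u -> all in01 u -> x \in u ->
  exists D, leaf1 u D /\ in_dyad D x.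
Proof.
move=> uu /allP a01 xu.
have /andP[x0 x1] := a01 x xu.
have exP : exists M, (fun M => npts u (lvl x M) <= 1)%N M.
  have hf : forall y, y \in [seq y <- u | y != x] -> y != x.
    by move=> y; rewrite mem_filter => /andP[].
  have [M HM] := @small_lvl x [seq y <- u | y != x] x0 hf.
  exists M; apply: count_le1 => // a b au bu ha hb.
  have E z : z \in u -> in_dyad (lvl x M) z -> z = x.
    move=> zu hz; apply/eqP; apply/negP => /negP nz.
    by move: (HM z); rewrite mem_filter nz zu hz => /(_ isT).
  by rewrite (E a au ha) (E b bu hb).
case: (ex_minnP exP) => m0 hm0 hmin.
exists (lvl x m0); split; last exact: in_lvl.
split; last first.
  apply/eqP; rewrite eqn_leq hm0 /= /npts -has_count.
  by apply/hasP; exists x => //; exact: in_lvl.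
split.
  rewrite /= -(ltr_nat R) natrX.
  have /andP[h _] := truncn_itv (mulr_ge0 x0 (ltW (two_gt0 m0))).
  apply: (le_lt_trans h).
  by rewrite -[X in _ < X]mul1r ltr_pM2r ?two_gt0.
move=> m' hm0'; have hm' : (m' < m0)%N := hm0'.
change (1 < npts u (anc m' (lvl x m0)))%N.
rewrite (anc_lvl x0 (ltnW hm')) ltnNge; apply/negP => h.
by move: (hmin _ h); rewrite leqNgt hm'.
Qed.


Lemma sum_count_nat (T : Type) (b : pred T) (s : seq T) :
  (\sum_(i <- s) (b i : nat))%N = count b s.
Proof. by elim: s => [|a s IH]; rewrite ?big_nil // big_cons IH. Qed.

Lemma count1_uniq (T : eqType) (a : pred T) (s : seq T) (x y : T) :
  count a s = 1%N -> x \in s -> y \in s -> a x -> a y -> x = y.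
Proof.
move=> c1 xs ys ax ay.
have hx : x \in [seq z <- s | a z] by rewrite mem_filter ax xs.
have hy : y \in [seq z <- s | a z] by rewrite mem_filter ay ys.
move: hx hy; rewrite -size_filter in c1.
case: [seq z <- s | a z] c1 => [|z [|]] //= _.
by rewrite !mem_seq1 => /eqP -> /eqP ->.
Qed.



Lemma count_one_pt (a p : pred R) u x : count a u = 1%N -> x \in u -> a x ->
  count (fun y => a y && p y) u = p x.
Proof.
move=> c1 xu ax.
have hf : [seq z <- u | a z] = [:: x].
  have hx : x \in [seq z <- u | a z] by rewrite mem_filter ax xu.
  move: hx; rewrite -size_filter in c1.
  by case: [seq z <- u | a z] c1 => [|z [|]] //= _; rewrite mem_seq1 => /eqP ->.
have := count_filter p a u; rewrite hf /= addn0 => ->.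
by apply: eq_count => y /=; rewrite andbC.
Qed.

Section Part.
Variable Is : seq dyad.
Hypothesis uIs : uniq Is.
Hypothesis disj : forall I J x, I \in Is -> J \in Is -> in_dyad I x -> @in_dyad R J x -> I = J.

Definition Gd u := (forall I, I \in Is -> npts u I = 1%N) /\
  (forall x, x \in u -> exists2 I, I \in Is & in_dyad I x).

Lemma count_part (p : pred R) u : (forall x, x \in u -> exists2 I, I \in Is & in_dyad I x) ->
  count p u = (\sum_(I <- Is) count (fun x => p x && in_dyad I x) u)%N.
Proof.
elim: u => [|x u IH] H /=.
  by rewrite big1_seq.
rewrite big_split /= -IH; last by move=> y yu; apply: H; rewrite inE yu orbT.
congr (_ + _)%N.
have [I II xI] := H x (mem_head _ _).
case px: (p x) => /=.
  apply/esym; rewrite sum_count_nat; apply: (@count_eq1 _ _ _ I) => //.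
  by move=> J JI xJ; exact: disj JI II xJ xI.
by rewrite big1_seq.
Qed.

Lemma npts_eq {u v A} : Gd u -> Gd v ->
  (forall I, I \in Is -> (forall x, in_dyad I x -> in_dyad A x) \/
                         (forall x, in_dyad I x -> ~~ @in_dyad R A x)) ->
  npts u A = npts v A.
Proof.
move=> [u1 u2] [v1 v2] H; rewrite /npts (count_part _ _ u2) (count_part _ _ v2).
apply: eq_big_seq => I II; case: (H I II) => h.
  have e1 : (fun x => in_dyad A x && in_dyad I x) =1 in_dyad I.
    by move=> x /=; case e: (in_dyad I x); rewrite ?andbF // (h x e).
  by rewrite (eq_count e1 u) (eq_count e1 v); have := u1 I II; have := v1 I II; rewrite /npts => -> ->.
have e1 : (fun x => in_dyad A x && in_dyad I x) =1 pred0.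
  by move=> x /=; case e: (in_dyad I x); rewrite ?andbF // (negbTE (h x e)).
by rewrite (eq_count e1 u) (eq_count e1 v) !count_pred0.
Qed.

Lemma dichot {u D m I} : (forall J, J \in Is -> npts u J = 1%N) -> tree_node u D ->
  (m <= D.1)%N -> I \in Is ->
  (forall x, in_dyad I x -> in_dyad (anc m D) x) \/
  (forall x, in_dyad I x -> ~~ @in_dyad R (anc m D) x).
Proof.
move=> h1 [_ hD] hm II.
case: I II => p q II.
case: (leqP m p) => hmp.
  case E: (anc m (p, q) == anc m D).
    left => x xI; rewrite -(eqP E); exact: (@in_dyad_anc (p,q) x m hmp xI).
  right => x xI; apply/negP => xA.
  have xA' := @in_dyad_anc (p,q) x m hmp xI.
  have := in_dyad_uniq xA xA'; rewrite /anc /= => e.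
  by move: E; rewrite /anc /= e eqxx.
have hpD : (p < D.1)%N := leq_trans hmp hm.
case E: (anc p D == (p, q)).
  have h2 : (1 < npts u (anc p D))%N := hD p hpD.
  by move: h2; rewrite (eqP E) (h1 _ II).
right => x xI; apply/negP => xA.
have xA' := @in_dyad_anc (anc m D) x p (ltnW hmp) xA.
rewrite anc_anc ?(ltnW hmp) // in xA'.
have := in_dyad_uniq xA' xI; rewrite /anc /= => e.
by move: E; rewrite /anc /= e eqxx.
Qed.

Lemma transfer {u v D} : Gd u -> Gd v -> tree_node u D ->
  tree_node v D /\ npts u D = npts v D.
Proof.
move=> Gu Gv tD.
have E m : (m <= D.1)%N -> npts u (anc m D) = npts v (anc m D).
  move=> hm; apply: npts_eq => // I II. exact: (dichot Gu.1 tD hm II).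
case: (tD) => h0 h1; split.
  split => // m hm; change (1 < npts v (anc m D))%N.
  by rewrite -(E m (ltnW hm)); exact: h1.
by have := E D.1 (leqnn _); rewrite anc_id.
Qed.

Lemma leaf1_transfer {u v D} : Gd u -> Gd v -> leaf1 u D -> leaf1 v D.
Proof.
move=> Gu Gv [tD n1]; have [tv e] := transfer Gu Gv tD; split => //.
by rewrite -e.
Qed.

Lemma size_Gd {u} : Gd u -> size u = size Is.
Proof.
move=> [h1 h2]; rewrite -count_predT (count_part _ _ h2) -sum1_size.
by apply: eq_big_seq => I II; rewrite -(h1 I II).
Qed.

End Part.


Lemma incr_id (f : nat -> nat) n :
  (forall i j, (i < j < n)%N -> (f i < f j)%N) -> (forall i, (i < n)%N -> (f i < n)%N) ->
  forall i, (i < n)%N -> f i = i.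
Proof.
move=> inc bnd.
have H d : forall i, (i + d < n)%N -> (f i + d <= f (i + d))%N.
  elim: d => [|d IH] i hi; first by rewrite !addn0.
  have h1 := IH i ltac:(lia).
  have h2 : (f (i + d) < f (i + d.+1))%N by apply: inc; apply/andP; split; lia.
  lia.
move=> i hi.
have h1 := H (n.-1 - i)%N i ltac:(lia).
have h2 := bnd (i + (n.-1 - i))%N ltac:(lia).
have h3 := H i 0%N ltac:(lia).
rewrite add0n in h3.
lia.
Qed.

Section Main.
Variables (k : nat) (Is : seq dyad) (t : seq R).
Hypotheses (st : size t = k) (ut : uniq t) (at01 : all in01 t) (pt : pi_graph t Is).

Lemma uIs : uniq Is.
Proof.
case: pt => so _; apply: (sorted_uniq _ _ so).
  by move=> b a c h1 h2; exact: lt_trans h1 h2.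
by move=> a; rewrite /= ltxx.
Qed.

Lemma disjIs : forall I J x, I \in Is -> J \in Is -> in_dyad I x -> @in_dyad R J x -> I = J.
Proof.
move=> I J x II JI; apply: leaf1_disj.
  exact: ((pt.2 I).1 II).
exact: ((pt.2 J).1 JI).
Qed.

Lemma Gt : Gd Is t.
Proof.
split.
  by move=> I II; exact: ((pt.2 I).1 II).2.
move=> x xt; have [D [lD xD]] := exists_leaf ut at01 xt.
by exists D => //; apply/(pt.2 D).2.
Qed.

Lemma ev_iff s : uniq s -> all in01 s ->
  (size s = k /\ pi_graph s Is) <-> Gd Is s.
Proof.
move=> us as01; split.
  move=> [sz ps]; split.
    by move=> I II; exact: ((ps.2 I).1 II).2.
  move=> x xs; have [D [lD xD]] := exists_leaf us as01 xs.
  by exists D => //; apply/(ps.2 D).2.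
move=> G; split.
  by rewrite (@size_Gd Is uIs disjIs s G) -st (@size_Gd Is uIs disjIs t Gt).
split; first exact: pt.1.
move=> I; split.
  move=> II; apply: (@leaf1_transfer Is uIs disjIs t s I Gt G); exact: (pt.2 I).1.
move=> lI; apply/(pt.2 I).2; exact: (@leaf1_transfer Is uIs disjIs s t I G Gt).
Qed.

Lemma sIs : size Is = k.
Proof. by rewrite -st (@size_Gd Is uIs disjIs t Gt). Qed.

Lemma nth_in s : Gd Is s -> uniq s -> sorted <%R s -> size s = k ->
  forall j, (j < k)%N -> in_dyad (nth (0%N, 0%N) Is j) (nth 0 s j).
Proof.
move=> G us ss sz.
pose f j := find (fun I => in_dyad I (nth 0 s j)) Is.
have hf j : (j < k)%N -> (f j < k)%N /\ in_dyad (nth (0%N, 0%N) Is (f j)) (nth 0 s j).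
  move=> hj.
  have hh : has (fun I => in_dyad I (nth 0 s j)) Is.
    have [I II xI] := G.2 (nth 0 s j) (@mem_nth _ 0 s j ltac:(by rewrite sz)).
    by apply/hasP; exists I.
  split; first by rewrite -sIs -has_find.
  exact: (nth_find (0%N, 0%N) hh).
have inc : forall i j, (i < j < k)%N -> (f i < f j)%N.
  move=> i j /andP[hij hj].
  have hi : (i < k)%N := ltn_trans hij hj.
  have [fi xi] := hf i hi; have [fj xj] := hf j hj.
  have lt_ij : nth 0 s i < nth 0 s j.
    apply: (sorted_ltn_nth lt_trans 0 ss); rewrite ?inE ?sz //.
  case: (ltngtP (f i) (f j)) => // h.
    exfalso.
    have lo1 : @dyad_left R (nth (0%N, 0%N) Is (f j)) < dyad_left (nth (0%N, 0%N) Is (f i)).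
      have tr : transitive (fun I J : dyad => @dyad_left R I < dyad_left J).
        by move=> b a c h1 h2; exact: lt_trans h1 h2.
      have := sorted_ltn_nth tr (0%N, 0%N) pt.1.
      move/(_ (f j) (f i)); rewrite !inE sIs; move/(_ fj fi h).
      by [].
    have lo2 : @dyad_left R (nth (0%N, 0%N) Is (f i)) < dyad_left (nth (0%N, 0%N) Is (f j)).
      move: xi xj; rewrite /in_dyad /dyad_left.
      set a := _ / _; set b := _ / _; set c := _ / _; set d := _ / _.
      move=> /andP[x1 x2] /andP[x3 x4].
      rewrite ltNge; apply/negP => hcb.
      have eqI : nth (0%N, 0%N) Is (f i) = nth (0%N, 0%N) Is (f j).
        apply: (disjIs _ _ (nth 0 s i)); rewrite ?mem_nth ?sIs //.
          by rewrite /in_dyad -/a -/b x1 x2.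
        rewrite /in_dyad -/c -/d (le_trans hcb x1) /=.
        exact: lt_trans lt_ij x4.
      have : f i == f j by rewrite -(nth_uniq (0%N, 0%N) _ _ uIs) ?sIs // eqI.
      by move/eqP => e; move: h; rewrite e ltnn.
    by move: (lt_trans lo1 lo2); rewrite ltxx.
  exfalso.
  have e : nth 0 s i = nth 0 s j.
    have c1 : count (in_dyad (nth (0%N,0%N) Is (f i))) s = 1%N :=
      G.1 _ (@mem_nth _ (0%N, 0%N) Is (f i) ltac:(by rewrite sIs)).
    have xj' : in_dyad (nth (0%N,0%N) Is (f i)) (nth 0 s j) by rewrite h.
    exact: (@count1_uniq _ _ _ _ _ c1 (@mem_nth _ 0 s i ltac:(by rewrite sz)) (@mem_nth _ 0 s j ltac:(by rewrite sz)) xi xj').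
  by move: lt_ij; rewrite e ltxx.
move=> j hj.
have := (hf j hj).2; rewrite (@incr_id f k inc (fun i hi => (hf i hi).1) j hj).
by [].
Qed.

End Main.

End Comb.

Section Meas.
Variable R : realType.

Lemma dyad_set_itv (I : dyad) : @dyad_set R I =
  [set` `[I.2%:R / 2%:R ^+ I.1, I.2.+1%:R / 2%:R ^+ I.1[%R].
Proof. by apply/seteqP; split => x; rewrite /= in_itv. Qed.

Lemma dyad_set_meas (I : dyad) : measurable (@dyad_set R I).
Proof. by rewrite dyad_set_itv; exact: measurable_itv. Qed.

Lemma leb_dyad (I : dyad) : lebesgue_measure (@dyad_set R I) = ((2%:R ^+ I.1)^-1)%:E.
Proof.
rewrite dyad_set_itv lebesgue_measure_itv /=.
have z0 : (0:R) < (2%:R ^+ I.1)^-1 by rewrite invr_gt0 two_gt0.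
rewrite lte_fin ltr_pM2r // ltr_nat ltnSn -EFinD; congr EFin.
by rewrite -mulrBl -natrB // subSnn mul1r.
Qed.


Lemma in01_dyad (x : R) : in01 x = in_dyad (0%N, 0%N) x.
Proof. by rewrite /in01 /in_dyad /= expr0 !divr1. Qed.

Lemma fin01 (A : set R) : measurable A -> A `<=` [set x | in01 x] ->
  lebesgue_measure A \is a fin_num.
Proof.
move=> mA sA.
have h : (lebesgue_measure A <= lebesgue_measure (@dyad_set R (0%N, 0%N)))%E.
  apply: le_measure; rewrite ?inE //; first exact: dyad_set_meas.
  by move=> x /sA; rewrite /= in01_dyad.
rewrite leb_dyad /= expr0 invr1 in h.
rewrite ge0_fin_numE ?measure_ge0 //; apply: (le_lt_trans h); exact: ltry.
Qed.

Lemma dyad_sub01 (p q : nat) : (q < 2 ^ p)%N -> @dyad_set R (p, q) `<=` [set x | in01 x].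
Proof.
move=> hq x; rewrite /dyad_set /= in_dyadE /= => /andP[h1 h2].
have hz := two_gt0 R p.
have hq' : (q.+1%:R : R) <= 2%:R ^+ p by rewrite -natrX ler_nat.
apply/andP; split.
  rewrite -(ler_pM2r hz) mul0r; apply: le_trans h1; exact: ler0n.
by rewrite -(ltr_pM2r hz) mul1r; exact: lt_le_trans h2 hq'.
Qed.

Lemma cnt_eq (A : set R) (p : pred R) s : (forall x, A x <-> p x) -> cnt A s = count p s.
Proof.
move=> h; apply: eq_count => x; apply/idP/idP => [/set_mem/h //|/h/mem_set //].
Qed.


Section Rect.
Variables (d : measure_display) (T : measurableType d) (P : probability T R).
Variables (Y : T -> seq R) (lam : R).
Hypothesis hPPP : homogeneous_PPP P lam Y.
Hypothesis hY : forall w, [/\ uniq (Y w), all in01 (Y w) & sorted <%R (Y w)].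
Variables (k : nat) (Is : seq dyad) (t : seq R).
Hypotheses (st : size t = k) (ut : uniq t) (at01 : all in01 t) (pt : pi_graph t Is).
Variable Bn : nat -> set R.
Hypothesis mBn : forall j, measurable (Bn j).

Let Ik j := nth (0%N, 0%N) Is j.
Definition Cset := [set x : R | in01 x /\ forall j, (j < k)%N -> ~~ in_dyad (Ik j) x].
Definition An (j : nat) : set R :=
  if (j < k)%N then dyad_set (Ik j) `&` Bn j
  else if (j < k + k)%N then dyad_set (Ik (j - k)) `\` Bn (j - k) else Cset.
Definition nn (j : nat) : nat := if (j < k)%N then 1%N else 0%N.
Definition Ev := [set w | size (Y w) = k /\ pi_graph (Y w) Is].
Definition Rect := [set w | forall i : 'I_k, Bn i (nth 0 (Y w) i)].

Let uIs' : uniq Is := @uIs R Is t pt.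
Let disj' := @disjIs R Is t pt.
Let sIs' : size Is = k := @sIs R k Is t st ut at01 pt.

Lemma IkIs {j} : (j < k)%N -> Ik j \in Is.
Proof. by move=> hj; apply: mem_nth; rewrite sIs'. Qed.

Lemma idx_uniq {j j'} {x : R} : (j < k)%N -> (j' < k)%N -> in_dyad (Ik j) x -> in_dyad (Ik j') x -> j = j'.
Proof.
move=> hj hj' h1 h2.
have e := disj' _ _ _ (IkIs hj) (IkIs hj') h1 h2.
by apply/eqP; rewrite -(nth_uniq (0%N, 0%N) _ _ uIs') ?sIs' // /Ik in e *; rewrite e.
Qed.

Lemma IsIk {I} : I \in Is -> exists2 j, (j < k)%N & I = Ik j.
Proof.
move=> II; exists (index I Is); first by rewrite -sIs' index_mem.
by rewrite /Ik nth_index.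
Qed.

Lemma Ik_sub01 {j} : (j < k)%N -> @dyad_set R (Ik j) `<=` [set x : R | in01 x].
Proof.
move=> hj; have := ((pt.2 (Ik j)).1 (IkIs hj)) => -[[h _] _].
by case: (Ik j) h => p q /= h; exact: dyad_sub01.
Qed.

Lemma ev_rect : Ev `&` Rect =
  \bigcap_(i in [set: 'I_(k + k).+1]) [set w | cnt (An i) (Y w) = nn i].
Proof.
apply/seteqP; split => w /=.
  move=> [[sz pg] hB] i _ /=.
  have [us as01 ss] := hY w.
  have G := (@ev_iff R k Is t st ut at01 pt (Y w) us as01).1 (conj sz pg).
  have nI := @nth_in R k Is t st ut at01 pt (Y w) G us ss sz.
  case: i => i hi /=; rewrite /An /nn.
  case: (ltnP i k) => h1.
    rewrite (@cnt_eq _ (fun x => in_dyad (Ik i) x && (x \in Bn i))); last first.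
      move=> x; split; first by move=> [a b]; rewrite a mem_set.
      by move=> /andP[a /set_mem b].
    rewrite (@count_one_pt R _ _ _ (nth 0 (Y w) i)) ?mem_nth ?sz ?nI //.
      by rewrite mem_set //; exact: (hB (Ordinal h1)).
    exact: G.1 _ (IkIs h1).
  case: (ltnP i (k + k)) => h2.
    have hik : (i - k < k)%N by lia.
    rewrite (@cnt_eq _ (fun x => in_dyad (Ik (i - k)) x && ~~ (x \in Bn (i - k)))); last first.
      move=> x; split; first by move=> [a b]; rewrite a /=; apply/negP => /set_mem.
      by move=> /andP[a b]; split => // /mem_set hb; rewrite hb in b.
    rewrite (@count_one_pt R _ _ _ (nth 0 (Y w) (i - k))) ?mem_nth ?sz ?nI //.
      by rewrite mem_set //; exact: (hB (Ordinal hik)).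
    exact: G.1 _ (IkIs hik).
  apply/eqP; rewrite -leqn0 leqNgt -has_count; apply/hasP => -[x xs /set_mem [_ hC]].
  have [I II xI] := G.2 x xs.
  have [j hj eI] := IsIk II.
  by move: (hC j hj); rewrite -eI xI.
move=> H.
have [us as01 ss] := hY w.
have H1 j : (j < k)%N -> cnt (An j) (Y w) = 1%N.
  move=> hj; have hj' : (j < (k + k).+1)%N by lia.
  by have := H (Ordinal hj') I; rewrite /nn /= hj.
have H2 j : (j < k)%N -> cnt (An (k + j)) (Y w) = 0%N.
  move=> hj; have hj' : (k + j < (k + k).+1)%N by lia.
  by have := H (Ordinal hj') I; rewrite /nn /= ltnNge leq_addr.
have H3 : cnt (An (k + k)) (Y w) = 0%N.
  by have := H (@ord_max (k + k)) I; rewrite /nn /= ltnNge leq_addr.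
have N1 j : (j < k)%N -> npts (Y w) (Ik j) = 1%N.
  move=> hj; have := H1 j hj; have := H2 j hj.
  rewrite /An hj ltnNge leq_addr /= ltn_add2l hj addKn.
  rewrite (@cnt_eq _ (fun x => in_dyad (Ik j) x && ~~ (x \in Bn j))); last first.
    move=> x; split; first by move=> [a b]; rewrite a /=; apply/negP => /set_mem.
    by move=> /andP[a b]; split => // /mem_set hb; rewrite hb in b.
  rewrite (@cnt_eq _ (fun x => in_dyad (Ik j) x && (x \in Bn j))); last first.
    move=> x; split; first by move=> [a b]; rewrite a mem_set.
    by move=> /andP[a /set_mem b].
  move=> c0 c1; rewrite /npts -size_filter -(count_predC (fun x => x \in Bn j) [seq x <- Y w | in_dyad (Ik j) x]).
  rewrite !count_filter.
  have -> : count (predI (fun x => x \in Bn j) (in_dyad (Ik j))) (Y w) = 1%N.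
    by rewrite -c1; apply: eq_count => x /=; rewrite andbC.
  have -> : count (predI (predC (fun x => x \in Bn j)) (in_dyad (Ik j))) (Y w) = 0%N.
    by rewrite -c0; apply: eq_count => x /=; rewrite andbC.
  by [].
have G : Gd R Is (Y w).
  split.
    by move=> I II; have [j hj ->] := IsIk II; exact: N1.
  move=> x xs.
  case: (boolP [exists j : 'I_k, in_dyad (Ik j) x]) => [/existsP [j hj]|/existsPn hn].
    by exists (Ik j) => //; exact: IkIs.
  exfalso; move: H3; rewrite /An ltnNge leq_addr /= ltnn => /eqP; rewrite -leqn0 leqNgt -has_count.
  move/negP; apply; apply/hasP; exists x => //; apply: mem_set; split.
    exact: (allP as01 x xs).
  by move=> j hj; exact: (hn (Ordinal hj)).
have [sz pg] := (@ev_iff R k Is t st ut at01 pt (Y w) us as01).2 G.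
split => //.
move=> i.
have nI := @nth_in R k Is t st ut at01 pt (Y w) G us ss sz i (ltn_ord i).
have := H1 i (ltn_ord i); rewrite /An ltn_ord.
rewrite (@cnt_eq _ (fun x => in_dyad (Ik i) x && (x \in Bn i))); last first.
  move=> x; split; first by move=> [a b]; rewrite a mem_set.
  by move=> /andP[a /set_mem b].
rewrite (@count_one_pt R _ _ _ (nth 0 (Y w) i)) ?mem_nth ?sz ?nI //.
  by case: (boolP (nth 0 (Y w) i \in Bn i)) => // /set_mem.
exact: G.1 _ (IkIs (ltn_ord i)).
Qed.



Lemma Cset_eq : Cset = [set x | in01 x] `&` \bigcap_(j in `I_k) ~` dyad_set (Ik j).
Proof.
apply/seteqP; split => x /=.
  move=> [h1 h2]; split => // j /= hj; apply/negP; exact: h2.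
move=> [h1 h2]; split => // j hj; apply/negP => h; exact: (h2 j hj h).
Qed.

Lemma Cset_meas : measurable Cset.
Proof.
rewrite Cset_eq; apply: measurableI.
  have -> : [set x : R | in01 x] = dyad_set (0%N, 0%N).
    by apply/seteqP; split => x /=; rewrite in01_dyad.
  exact: dyad_set_meas.
apply: fin_bigcap_measurable; first exact: finite_II.
by move=> j _; apply: measurableC; exact: dyad_set_meas.
Qed.

Lemma An_props i : measurable (An i) /\ An i `<=` [set x | in01 x].
Proof.
rewrite /An; case: (ltnP i k) => h1.
  split; first by apply: measurableI; [exact: dyad_set_meas|exact: mBn].
  by move=> x [a _]; exact: (Ik_sub01 h1).
case: (ltnP i (k + k)) => h2.
  have hik : (i - k < k)%N by lia.
  split; first by apply: measurableD; [exact: dyad_set_meas|exact: mBn].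
  by move=> x [a _]; exact: (Ik_sub01 hik).
split; first exact: Cset_meas.
by move=> x [].
Qed.

Lemma An_disj {i j} {x : R} : (i < (k + k).+1)%N -> (j < (k + k).+1)%N ->
  An i x -> An j x -> i = j.
Proof.
rewrite /An => hi hj.
case: (ltnP i k) => a1; case: (ltnP j k) => b1.
- by move=> [ha _] [hb _]; exact: idx_uniq a1 b1 ha hb.
- case: (ltnP j (k + k)) => b2.
    move=> [ha hBa] [hb hBb]; have e := idx_uniq a1 (ltac:(lia) : (j - k < k)%N) ha hb.
    by exfalso; apply: hBb; rewrite -e.
  by move=> [ha _] [_ hC]; exfalso; move/negP: (hC i a1).
- case: (ltnP i (k + k)) => a2.
    move=> [ha hBa] [hb hBb]; have e := idx_uniq b1 (ltac:(lia) : (i - k < k)%N) hb ha.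
    by exfalso; apply: hBa; rewrite -e.
  by move=> [_ hC] [hb _]; exfalso; move/negP: (hC j b1).
- case: (ltnP i (k + k)) => a2; case: (ltnP j (k + k)) => b2.
  + move=> [ha _] [hb _].
    have e := idx_uniq (ltac:(lia) : (i - k < k)%N) (ltac:(lia) : (j - k < k)%N) ha hb.
    lia.
  + by move=> [ha _] [_ hC]; exfalso; move/negP: (hC (i - k)%N ltac:(lia)).
  + by move=> [_ hC] [hb _]; exfalso; move/negP: (hC (j - k)%N ltac:(lia)).
  + move=> _ _; lia.
Qed.

Lemma meas_ev : measurable (Ev `&` Rect).
Proof.
rewrite ev_rect; apply: fin_bigcap_measurable; first exact: finite_finset.
move=> i _; exact: hPPP.1 _ (An_props i).1 _.
Qed.

Lemma prob_ev0 : P (Ev `&` Rect) =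
  (\prod_(i < (k + k).+1) poisson_p (lam * fine (lebesgue_measure (An i))) (nn i))%:E.
Proof.
rewrite ev_rect; apply: (hPPP.2 (k + k).+1 (fun i => An i)).
  by move=> i; exact: An_props.
move=> i j hij; apply/seteqP; split => // x [h1 h2].
have e : i = j by apply/val_inj; exact: (An_disj (ltn_ord i) (ltn_ord j) h1 h2).
by move: hij; rewrite e eqxx.
Qed.



Lemma prod3 (G : nat -> R) n : \prod_(i < (n + n).+1) G i =
  (\prod_(i < n) G i) * (\prod_(i < n) G (n + i)%N) * G (n + n)%N.
Proof. by rewrite big_ord_recr /= big_split_ord. Qed.

Definition alen i := fine (lebesgue_measure (dyad_set (Ik i) `&` Bn i)).
Definition Kc := lam ^+ k * \prod_(i < k) expR (- (lam * fine (lebesgue_measure (@dyad_set R (Ik i))))) *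
  expR (- (lam * fine (lebesgue_measure Cset))).

Lemma prob_ev : P (Ev `&` Rect) = (Kc * \prod_(i < k) alen i)%:E.
Proof.
rewrite prob_ev0; congr EFin.
rewrite (@prod3 (fun n => poisson_p (lam * fine (lebesgue_measure (An n))) (nn n)) k).
set blen := fun i => fine (lebesgue_measure (dyad_set (Ik i) `\` Bn i)).
have E1 : \prod_(i < k) poisson_p (lam * fine (lebesgue_measure (An i))) (nn i) =
    lam ^+ k * \prod_(i < k) alen i * \prod_(i < k) expR (- (lam * alen i)).
  have -> : lam ^+ k = \prod_(i < k) lam by rewrite prodr_const card_ord.
  rewrite -!big_split /=; apply: eq_bigr => i _.
  by rewrite /An /nn ltn_ord /poisson_p expr1 /= divr1.
have E2 : \prod_(i < k) poisson_p (lam * fine (lebesgue_measure (An (k + i)%N))) (nn (k + i)%N) =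
    \prod_(i < k) expR (- (lam * blen i)).
  apply: eq_bigr => i _.
  rewrite /An /nn ltnNge leq_addr /= ltn_add2l ltn_ord addKn /poisson_p expr0 /=.
  by rewrite divr1 mul1r.
have E3 : poisson_p (lam * fine (lebesgue_measure (An (k + k)%N))) (nn (k + k)%N) =
    expR (- (lam * fine (lebesgue_measure Cset))).
  rewrite /An /nn ltnNge leq_addr /= ltnn /poisson_p expr0 /=.
  by rewrite divr1 mul1r.
have E4 : \prod_(i < k) expR (- (lam * alen i)) * \prod_(i < k) expR (- (lam * blen i)) =
    \prod_(i < k) expR (- (lam * fine (lebesgue_measure (@dyad_set R (Ik i))))).
  rewrite -big_split /=; apply: eq_bigr => i _.
  rewrite -expRD; congr expR.
  have hI := Ik_sub01 (ltn_ord i).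
  have m1 := dyad_set_meas (Ik i).
  rewrite (measureDI (@lebesgue_measure R) m1 (mBn i)) fineD; last 2 first.
  - by apply: fin01; [apply: measurableD|apply: subset_trans hI; apply: subDsetl].
  - by apply: fin01; [apply: measurableI|apply: subset_trans hI; apply: subIsetl].
  rewrite /alen /blen; lra.
rewrite E1 E2 E3 /Kc -E4; ring.
Qed.

End Rect.

End Meas.

Lemma path_lt_last (R : realType) (a b : R) s : path <%R a (rcons s b) -> all (fun x => x < b) s.
Proof.
elim: s a => [//|x s IH] a /= /andP[_ h]; rewrite (IH _ h) andbT.
by have := order_path_min lt_trans h; rewrite all_rcons => /andP[].
Qed.

Lemma Dfacts (R : realType) (E : Type) (f : R -> E) s : D_with_jumps f s ->
  [/\ uniq s, all in01 s & sorted <%R s].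
Proof.
case=> so _ _.
have p1 : path <%R 0 (rcons s 1) := so.
have h1 := @path_lt_last R 0 1 s p1.
move: p1; rewrite rcons_path => /andP[p2 _].
have h0 := order_path_min lt_trans p2.
have ss := path_sorted p2.
split => //; first exact: (sorted_uniq lt_trans ltxx ss).
apply/allP => x xs; rewrite /in01 (ltW (allP h0 x xs)).
exact: (allP h1 x xs).
Qed.

Lemma Q_rect (R : realType) d' (T' : measurableType d') (Q : probability T' R) k
  (U : 'I_k -> T' -> R) Is (hU : indep_uniform_on Q U Is) (Bn : nat -> set R)
  (mBn : forall j, measurable (Bn j))
  (hsub : forall j, (j < k)%N -> @dyad_set R (nth (0%N, 0%N) Is j) `<=` [set x | in01 x]) :
  Q (\bigcap_(i in [set: 'I_k]) (U i @^-1` Bn i)) =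
  (\prod_(i < k) (alen R Is Bn i / fine (lebesgue_measure (@dyad_set R (nth (0%N, 0%N) Is i)))))%:E.
Proof.
case: hU => _ hind hunif.
rewrite (hind (fun i => Bn i)) // -prodEFin; apply: eq_bigr => i _.
rewrite hunif // EFinM setIC /alen fineK //.
apply: fin01; first by apply: measurableI; [exact: dyad_set_meas|exact: mBn].
apply: subset_trans (hsub i (ltn_ord i)); exact: subIsetl.
Qed.

Lemma in_bigsetU (X : Type) n (F : 'I_n -> set (set X)) (A : set X) :
  (\big[setU/set0]_(i < n) F i) A -> exists i, F i A.
Proof.
elim/big_rec: _ => [//|i S _ IH [h|h]]; first by exists i.
exact: IH.
Qed.

Lemma prod_div (R : realType) k (a l : nat -> R) : (forall i, l i != 0) ->
  \prod_(i < k) a i = \prod_(i < k) l i * \prod_(i < k) (a i / l i).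
Proof.
move=> h; rewrite -big_split; apply: eq_bigr => i _ /=.
by rewrite mulrCA mulfV ?mulr1.
Qed.

Lemma compl_step (R : realType) d (T : measurableType d) (P : probability T R)
  d' (T' : measurableType d') (Q : probability T' R) (A Xs : set T) (Z : set T') :
  measurable A -> measurable Xs -> Xs `<=` A -> measurable Z ->
  P Xs = (P A * Q Z)%E -> P (A `\` Xs) = (P A * Q (~` Z))%E.
Proof.
move=> mA mX sXA mZ e.
have fA : P A \is a fin_num by rewrite fin_num_measure.
apply: (etrans (measureD (mu:=P) mA mX _)); first by rewrite -ge0_fin_numE ?measure_ge0.
rewrite (setIidr sXA).
transitivity (P A - P Xs)%E; first by [].
rewrite e probability_setC // muleBr ?mule1 ?fin_num_measure //.

Qed.

Section MainThm.
Variables (R : realType) (k : nat).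

Definition rect (Bn : nat -> set R) : set (k.-tuple R) :=
  [set x | forall i : 'I_k, Bn i (tnth x i)].

Lemma rect_meas Bn : (forall j, measurable (Bn j)) -> measurable (rect Bn).
Proof.
move=> mB.
have -> : rect Bn = \bigcap_(i in [set: 'I_k]) ((tnth (T:=R))^~ i @^-1` Bn i).
  by apply/seteqP; split => x /= h i; [move=> _|]; exact: h.
apply: fin_bigcap_measurable; first exact: finite_finset.
move=> i _; rewrite -[X in measurable X]setTI.
exact: (measurable_tnth i measurableT (mB i)).
Qed.

Definition Gr := [set S : set (k.-tuple R) | exists Bn : nat -> set R,
  (forall j, measurable (Bn j)) /\ S = rect Bn].

Lemma meas_Gr : @measurable _ (k.-tuple R) = <<s Gr >>.
Proof.
apply/seteqP; split.
  have -> : @measurable _ (k.-tuple R) = <<s \big[setU/set0]_(i < k)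
     preimage_set_system setT (fun x : k.-tuple R => tnth x i) measurable >> by [].
  apply: smallest_sub; first exact: smallest_sigma_algebra.
  move=> A /in_bigsetU [i [B mB <-]].
  apply: sub_gen_smallest.
  exists (fun j => if j == val i then B else setT); split.
    by move=> j; case: ifP.
  apply/seteqP; split => x /=.
    move=> [_ h] j; case: ifP => // /eqP e.
    by have -> : j = i by apply/val_inj.
  by move=> h; split => //; have := h i; rewrite eqxx.
apply: smallest_sub; first exact: sigma_algebra_measurable.
by move=> S [Bn [mB ->]]; exact: rect_meas.
Qed.

Lemma setI_Gr : setI_closed Gr.
Proof.
move=> A B [Bn [mB ->]] [Bn' [mB' ->]].
exists (fun j => Bn j `&` Bn' j); split.
  by move=> j; apply: measurableI.
by apply/seteqP; split => x /=; [move=> [h1 h2] i|move=> h; split => i; case: (h i)].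
Qed.

End MainThm.

Theorem lemma5 (R : realType) (E : Type)
  (d : measure_display) (T : measurableType d) (P : probability T R)
  (X : T -> R -> E) (Y : T -> seq R) (lam : R)
  (hlam : 0 < lam)
  (hXY : forall w, D_with_jumps (X w) (Y w))
  (hPPP : homogeneous_PPP P lam Y)
  (k : nat) (hk : (1 <= k)%N) (Is : seq dyad) (hIs : @in_im_pi R k Is)
  (d' : measure_display) (T' : measurableType d') (Q : probability T' R)
  (U : 'I_k -> T' -> R) (hU : indep_uniform_on Q U Is) :
  let Ev := [set w | size (Y w) = k /\ pi_graph (Y w) Is] in
  forall B : set (k.-tuple R), measurable B ->
    P (Ev `&` [set w | [tuple nth 0 (Y w) i | i < k] \in B]) =
    (P Ev * Q [set w' | [tuple U i w' | i < k] \in B])%E.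
Proof.
move=> Ev B mB.
have [t [st ut at01 pt]] := hIs.
have hY w : [/\ uniq (Y w), all in01 (Y w) & sorted <%R (Y w)] := @Dfacts R E (X w) (Y w) (hXY w).
have hsub j : (j < k)%N -> @dyad_set R (nth (0%N, 0%N) Is j) `<=` [set x | in01 x].
  by move=> hj; exact: (@Ik_sub01 R k Is t st ut at01 pt j hj).
pose Yt w := [tuple nth 0 (Y w) i | i < k].
pose Ut w' := [tuple U i w' | i < k].
pose len i := fine (lebesgue_measure (@dyad_set R (nth (0%N, 0%N) Is i))).
have len0 i : len i != 0.
  by rewrite /len leb_dyad /= invr_eq0 expf_eq0 pnatr_eq0 andbF.
have EvR Bn : Ev `&` [set w | Yt w \in rect R k Bn] = Ev `&` Rect R d T Y k Bn.
  apply/seteqP; split => w /= [h1 h2]; split => //.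
    by move=> i; move/set_mem: h2 => /(_ i); rewrite tnth_mktuple.
  by apply: mem_set => i; rewrite tnth_mktuple; exact: h2.
have UR Bn : [set w' | Ut w' \in rect R k Bn] = \bigcap_(i in [set: 'I_k]) (U i @^-1` Bn i).
  apply/seteqP; split => w /=.
    by move/set_mem => h i _; have := h i; rewrite tnth_mktuple.
  by move=> h; apply: mem_set => i; rewrite tnth_mktuple; exact: h.
have EvE : Ev `&` [set w | Yt w \in rect R k (fun _ => setT)] = Ev.
  apply/seteqP; split => w /=; first by case.
  by move=> h; split => //; apply: mem_set.
have mEv : measurable Ev.
  rewrite -EvE EvR; exact: (@meas_ev R d T P Y lam hPPP hY k Is t st ut at01 pt _ (fun _ => measurableT)).
have PEv : P Ev = (Kc R lam k Is * \prod_(i < k) len i)%:E.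
  rewrite -EvE EvR (@prob_ev R d T P Y lam hPPP hY k Is t st ut at01 pt _ (fun _ => measurableT)).
  by congr EFin; congr (_ * _); apply: eq_bigr => i _; rewrite /alen setIT.
have fP : P Ev \is a fin_num by rewrite PEv.
pose Pp (S : set (k.-tuple R)) :=
  [/\ measurable (Ev `&` [set w | Yt w \in S]), measurable [set w' | Ut w' \in S] &
      P (Ev `&` [set w | Yt w \in S]) = (P Ev * Q [set w' | Ut w' \in S])%E].
have GP : Gr R k `<=` Pp.
  move=> S [Bn [mBn ->]]; split.
  - rewrite EvR; exact: (@meas_ev R d T P Y lam hPPP hY k Is t st ut at01 pt _ mBn).
  - rewrite UR; apply: fin_bigcap_measurable; first exact: finite_finset.
    move=> i _; case: hU => hm _ _.
    by have := hm i measurableT _ (mBn i); rewrite setTI.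
  - rewrite EvR (@prob_ev R d T P Y lam hPPP hY k Is t st ut at01 pt _ mBn) UR (@Q_rect R d' T' Q k U Is hU _ mBn hsub) PEv.
    rewrite -EFinM; congr EFin.
    transitivity (Kc R lam k Is * (\prod_(i < k) len i * \prod_(i < k) (alen R Is Bn i / len i))).
      by rewrite -(@prod_div R k (alen R Is Bn) len len0).
    by rewrite mulrA.
suff : Pp B by case.
apply: (@dynkin_induction _ _ (Gr R k) Pp (meas_Gr R k) (@setI_Gr R k)).
- have -> : [set: k.-tuple R] = rect R k (fun _ => setT) by apply/seteqP; split.
  apply: GP; exists (fun _ => setT); split => //.
- exact: GP.
- move=> S mS [m1 m2 e].
  have e1 : Ev `&` [set w | Yt w \in ~` S] = Ev `\` (Ev `&` [set w | Yt w \in S]).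
    apply/seteqP; split => w /=.
      by move=> [h1 h2]; split => // -[_ h3]; move: h2; rewrite in_setC h3.
    by move=> [h1 h2]; split => //; rewrite in_setC; apply/negP => h3; apply: h2.
  have e2 : [set w' | Ut w' \in ~` S] = ~` [set w' | Ut w' \in S].
    by apply/seteqP; split => w /=; rewrite in_setC => /negP.
  split.
  - by rewrite e1; apply: measurableD.
  - by rewrite e2; apply: measurableC.
  rewrite e1 e2.
  exact: (@compl_step R d T P d' T' Q Ev (Ev `&` [set w | Yt w \in S]) [set w' | Ut w' \in S]
    mEv m1 (@subIsetl _ _ _) m2 e).
- move=> F mF tF hF.
  have e1 : Ev `&` [set w | Yt w \in \bigcup_n F n] = \bigcup_n (Ev `&` [set w | Yt w \in F n]).
    apply/seteqP; split => w /=.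
      by move=> [h1 /set_mem [n _ hn]]; exists n => //; split => //; apply: mem_set.
    by move=> [n _ [h1 /set_mem hn]]; split => //; apply: mem_set; exists n.
  have e2 : [set w' | Ut w' \in \bigcup_n F n] = \bigcup_n [set w' | Ut w' \in F n].
    apply/seteqP; split => w /=.
      by move=> /set_mem [n _ hn]; exists n => //; apply: mem_set.
    by move=> [n _ /set_mem hn]; apply: mem_set; exists n.
  have mE n : measurable (Ev `&` [set w | Yt w \in F n]) by case: (hF n).
  have mZ n : measurable [set w' | Ut w' \in F n] by case: (hF n).
  split.
  - by rewrite e1; apply: bigcup_measurable => n _.
  - by rewrite e2; apply: bigcup_measurable => n _.
  rewrite e1 e2 measure_bigcup //; last first.
    move=> i j _ _ [w [[_ /set_mem h1] [_ /set_mem h2]]].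
    by apply: tF => //; exists (Yt w).
  rewrite [in RHS]measure_bigcup //; last first.
    move=> i j _ _ [w [/set_mem h1 /set_mem h2]].
    by apply: tF => //; exists (Ut w).
  transitivity (\big[+%E/0]_(0 <= i <oo | i \in [set: nat]) ((fine (P Ev))%:E * Q [set w' | Ut w' \in F i]))%E.
    by apply: eq_eseriesr => i _; case: (hF i) => _ _ h; rewrite fineK //; exact: h.
  by rewrite nneseriesZl ?fineK // => i _; exact: measure_ge0.
- by rewrite -meas_Gr.
Qed.
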